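(* Let $\mathbb{V}$ and $\mathbb{V}'$ be varieties with signatures $\mathcal{F}\subseteq\mathcal{F}'$ and defining sets of identities $\Sigma\subseteq\Sigma'$ respectively, and suppose $\mathbb{V}$ is BIT speciale with terms $0,\alpha_1,\dots,\alpha_n,\theta$ (so $\mathbb{V}'$ is BIT speciale with the same terms, and every $\mathbb{V}'$-algebra is a $\mathbb{V}$-algebra by forgetting the operations in $\mathcal{F}'\setminus\mathcal{F}$). Let $A'$ be a $\mathbb{V}'$-algebra and $H\subseteq A'$. The following are equivalent: (i) $H$ is an ideal of $A'$ in the variety $\mathbb{V}'$; (ii) $H$ is an ideal of $A'$ in the variety $\mathbb{V}$, and for every $\tau\in\mathcal{F}'\setminus\mathcal{F}$ of arity $k$, all $a_1,\dots,a_k\in A'$, all $1\le i\le n$ and all $h_{rs}\in H$ ($1\le r\le k$, $1\le s\le n$), one has $\alpha_i\big(\tau(\theta(h_{11},\dots,h_{1n},a_1),\dots,\theta(h_{k1},\dots,h_{kn},a_k)),\tau(a_1,\dots,a_k)\big)\in H$; (iii) $H$ is an ideal of $A'$ in the variety $\mathbb{V}$, and for every $\tau\in\mathcal{F}'\setminus\mathcal{F}$ of arity $k$, all $a_1,\dots,a_k\in A'$, all $1\le i\le n$, $1\le j\le k$ and all $h_1,\dots,h_n\in H$, one has $\alpha_i\big(\tau(a_1,\dots,a_{j-1},\theta(h_1,\dots,h_n,a_j),a_{j+1},\dots,a_k),\tau(a_1,\dots,a_k)\big)\in H$.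
   Context: BIT speciale: the algebraic theory contains a constant $0$ and, for some $n\ge1$, binary terms $\alpha_1,\dots,\alpha_n$ and an $(n+1)$-ary term $\theta$ such that $\alpha_i(x,x)=0$ and $\theta(\alpha_1(x,y),\dots,\alpha_n(x,y),y)=x$ are identities. For a variety $\mathbb{W}$ with signature $\mathcal{G}$ containing $0$ in its theory: an ideal term of $\mathbb{W}$ in the variables $y_1,\dots,y_p$ is a term $t(x_1,\dots,x_m,y_1,\dots,y_p)$ over $\mathcal{G}$ such that $t(x_1,\dots,x_m,0,\dots,0)=0$ is an identity of $\mathbb{W}$; a non-empty subset $H$ of a $\mathbb{W}$-algebra $A$ is an ideal of $A$ in $\mathbb{W}$ if $t(a_1,\dots,a_m,b_1,\dots,b_p)\in H$ for every ideal term $t$ of $\mathbb{W}$, all $a_r\in A$ and all $b_s\in H$. *)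

(* Defs.v *)
From mathcomp Require Import all_boot.
Set Implicit Arguments.
Unset Strict Implicit.
Unset Printing Implicit Defensive.

Record signature := Signature { op : Type; arity : op -> nat }.

Inductive term (S : signature) : Type :=
| Var : nat -> term S
| App : forall o : op S, ('I_(arity o) -> term S) -> term S.
Arguments Var {S} _.
Arguments App {S} o _.

Record algebra (S : signature) := Algebra {
  carrier :> Type;
  interp : forall o : op S, ('I_(arity o) -> carrier) -> carrier }.

Fixpoint eval (S : signature) (A : algebra S) (e : nat -> A) (t : term S) : A :=
  match t with
  | Var k => e k
  | App o f => @interp S A o (fun i => eval e (f i))
  end.
Arguments eval {S} A e t.

Fixpoint subst (S : signature) (s : nat -> term S) (t : term S) : term S :=
  match t with
  | Var k => s k
  | App o f => App o (fun i => subst s (f i))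
  end.

(* all variables of t are < m (t is an m-ary term) *)
Fixpoint vars_lt (S : signature) (m : nat) (t : term S) : Prop :=
  match t with
  | Var k => k < m
  | App o f => forall i, vars_lt m (f i)
  end.

Definition identities (S : signature) := term S -> term S -> Prop.

Definition models (S : signature) (Sigma : identities S) (A : algebra S) : Prop :=
  forall t u, Sigma t u -> forall e : nat -> A, eval A e t = eval A e u.

Definition identity_of (S : signature) (Sigma : identities S) (t u : term S) : Prop :=
  forall A : algebra S, models Sigma A -> forall e : nat -> A, eval A e t = eval A e u.

(* BIT speciale with terms zero (a constant: no variables), alpha_0..alpha_{n-1}
   (binary, variables 0,1) and theta ((n+1)-ary, variables 0..n). *)
Definition BIT_speciale (S : signature) (Sigma : identities S) (n : nat)
  (zero : term S) (alpha : nat -> term S) (theta : term S) : Prop :=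
  1 <= n /\ [/\ vars_lt 0 zero,
      (forall i, i < n -> vars_lt 2 (alpha i)),
      vars_lt n.+1 theta,
      (forall i, i < n -> identity_of Sigma (subst (fun _ => Var 0) (alpha i)) zero) &
      identity_of Sigma
        (subst (fun k => if k < n then alpha k else Var 1) theta) (Var 0)].

Definition ideal_term (S : signature) (Sigma : identities S) (zero : term S)
  (Y : seq nat) (t : term S) : Prop :=
  identity_of Sigma (subst (fun k => if k \in Y then zero else Var k) t) zero.

Definition ideal (S : signature) (Sigma : identities S) (zero : term S)
  (A : algebra S) (H : A -> Prop) : Prop :=
  (exists x, H x) /\
  forall (Y : seq nat) (t : term S), ideal_term Sigma zero Y t ->
  forall e : nat -> A, (forall k, k \in Y -> H (e k)) -> H (eval A e t).

Arguments ideal {S} Sigma zero A H.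

Definition subsig (S' : signature) (inF : op S' -> bool) : signature :=
  Signature (fun o : {o : op S' | inF o} => arity (proj1_sig o)).

Fixpoint emb (S' : signature) (inF : op S' -> bool) (t : term (subsig inF)) : term S' :=
  match t with
  | Var k => Var k
  | App o f => App (proj1_sig o) (fun i => emb (f i))
  end.

Definition reduct (S' : signature) (inF : op S' -> bool) (A : algebra S') :
  algebra (subsig inF) :=
  @Algebra (subsig inF) A (fun o f => @interp S' A (proj1_sig o) f).

Definition env2 (A : Type) (x y : A) : nat -> A := fun k => if k == 0 then x else y.
Definition envth (A : Type) (n : nat) (h : nat -> A) (a : A) : nat -> A :=
  fun k => if k < n then h k else a.

(* Main.v *)
Require Import Defs.
From mathcomp Require Import all_boot.
From Stdlib Require Import FunctionalExtensionality.

Ltac fext := apply: functional_extensionality.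

Lemma eval_subst (T : signature) (B : algebra T) g s t :
  eval B g (subst s t) = eval B (fun k => eval B g (s k)) t.
Proof.
elim: t => [k|o f IH] //=. congr (interp _). fext => i. exact: IH.
Qed.

Lemma eval_vars (T : signature) (B : algebra T) m t e e' :
  vars_lt m t -> (forall k, k < m -> e k = e' k) -> eval B e t = eval B e' t.
Proof.
move=> + He; elim: t => [k|o f IH] /=; first exact: He.
move=> Hv; congr (interp _); fext => i; exact: IH.
Qed.

Lemma eval_emb (S' : signature) (inF : op S' -> bool) (B : algebra S') e t :
  eval B e (emb t) = eval (reduct inF B) e t.
Proof.
elim: t => [k|o f IH] //=. congr (interp _). fext => i. exact: IH.
Qed.

Lemma chain (X Y : Type) k (Ri : X -> X -> Prop) (Ro : Y -> Y -> Prop)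
  (f : ('I_k -> X) -> Y) :
  (forall y, Ro y y) -> (forall x y z, Ro x y -> Ro y z -> Ro x z) ->
  (forall a j x, Ri x (a j) -> Ro (f (fun r => if r == j then x else a r)) (f a)) ->
  forall a b, (forall r, Ri (a r) (b r)) -> Ro (f a) (f b).
Proof.
move=> Hr Ht Hs a b Hab.
have K: forall m, Ro (f (fun r => if val r < m then a r else b r)) (f b).
  elim=> [|m IH].
    have ->: (fun r : 'I_k => if val r < 0 then a r else b r) = b by fext.
    exact: Hr.
  case: (ltnP m k) => Hm.
    pose j := Ordinal Hm.
    have E: (fun r : 'I_k => if val r < m.+1 then a r else b r) =
      (fun r => if r == j then a j else (fun r => if val r < m then a r else b r) r).
      fext => r. case: (eqVneq r j) => [->|Hne] /=; first by rewrite ltnSn.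
      have Hv : val r != m.
        apply: contra Hne => /eqP Hv; apply/eqP; exact: val_inj.
      by rewrite ltnS leq_eqVlt (negbTE Hv).
    rewrite E. apply: Ht IH. apply: Hs. by rewrite /= ltnn; apply: Hab.
  have ->: (fun r : 'I_k => if val r < m.+1 then a r else b r) =
           (fun r => if val r < m then a r else b r).
    fext => r. have Hr1 : val r < m by apply: leq_trans (ltn_ord r) Hm.
    by rewrite Hr1 (ltn_trans Hr1 (ltnSn m)).
  exact: IH.
have := K k.
have -> //: (fun r : 'I_k => if val r < k then a r else b r) = a.
by fext => r; rewrite ltn_ord.
Qed.

Record bit (T : signature) (Sg : identities T) (n : nat) (z : term T)
  (al : nat -> term T) (th : term T) : Prop := Bit {
  bz : forall B, models Sg B -> forall e e', eval B e z = eval B e' z;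
  bal : forall B, models Sg B -> forall i, i < n -> forall u e,
        eval B (env2 u u) (al i) = eval B e z;
  bth : forall B, models Sg B -> forall x y,
        eval B (envth n (fun k => eval B (env2 x y) (al k)) y) th = x }.
Arguments bz {T Sg n z al th} _ {B} _ _ _.
Arguments bal {T Sg n z al th} _ {B} _ {i} _ _ _.
Arguments bth {T Sg n z al th} _ {B} _ _ _.

Lemma bth0 T Sg n z al th (Hb : @bit T Sg n z al th) B (HB : models Sg B) y e :
  eval B (envth n (fun _ => eval B e z) y) th = y.
Proof.
rewrite -{2}(bth Hb HB y y). congr (eval _ _ _). fext => k. rewrite /envth.
case: ifP => // Hk. by rewrite (bal Hb HB Hk y e).
Qed.
Arguments bth0 {T Sg n z al th} Hb {B} HB y e.

Lemma memY n m : (m.*2.+1 \in map (fun s => s.*2.+1) (iota 0 n)) = (m < n).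
Proof.
rewrite mem_map ?mem_iota //. by move=> x y [] /double_inj.
Qed.

Lemma memY2 n m : (m.*2 \in map (fun s => s.*2.+1) (iota 0 n)) = false.
Proof.
apply/negP => /mapP [s _ E]. have := congr1 odd E. by rewrite /= !odd_double.
Qed.


Lemma gH0 {T Sg n z al th} (Hb : @bit T Sg n z al th) {C : algebra T} {H : C -> Prop}
  (HI : ideal Sg z C H) e : H (eval C e z).
Proof.
apply: (HI.2 [::] z) => //. move=> B HB g. rewrite eval_subst. exact: (bz Hb HB).
Qed.

Lemma gin_theta {T Sg n z al th} (Hb : @bit T Sg n z al th) {C : algebra T} {H : C -> Prop}
  (HI : ideal Sg z C H) h y :
  (forall s, s < n -> H (h s)) -> H y -> H (eval C (envth n h y) th).
Proof.
move=> Hh Hy.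
have := HI.2 (iota 0 n.+1) (subst (fun k => if k < n.+1 then Var k else Var n) th) _
  (envth n h y).
rewrite eval_subst.
have ->: (fun k => eval C (envth n h y) (if k < n.+1 then Var k else Var n)) = envth n h y.
  fext => k; case: ltnP => Hk /=; rewrite /envth //.
  rewrite ltnn ifF //. apply/negbTE; rewrite -leqNgt; exact: ltnW Hk.
apply.
  move=> B HB g. rewrite !eval_subst. rewrite -[RHS](bth0 Hb HB (eval B g z) g).
  congr (eval _ _ _). fext => k. rewrite /envth. case: (ltnP k n.+1) => Hk.
    cbn [eval]; rewrite mem_iota add0n Hk /=. by case: ifP.
  cbn [eval]; rewrite mem_iota add0n ltnSn /= ifF //.
  apply/negbTE; rewrite -leqNgt; exact: ltnW Hk.
move=> k; rewrite mem_iota /= add0n /envth; case: ifP => // Hk _; exact: Hh.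
Qed.

Definition sim {T} (C : algebra T) n (al : nat -> term T) (H : C -> Prop) (x y : C) :=
  forall i, i < n -> H (eval C (env2 x y) (al i)).

Lemma gsim0 {T Sg n z al th} (Hb : @bit T Sg n z al th) {C : algebra T} (HC : models Sg C)
  {H : C -> Prop} (HI : ideal Sg z C H) h e : H h -> sim C n al H h (eval C e z).
Proof.
move=> Hh i Hi.
have := HI.2 [:: 0] (subst (fun m => if m == 0 then Var 0 else z) (al i)) _ (fun _ => h).
rewrite eval_subst.
have ->: (fun m => eval C (fun _ => h) (if m == 0 then Var 0 else z)) = env2 h (eval C e z).
  fext => m; rewrite /env2; case: ifP => //= _; exact: (bz Hb HC).
apply; last by move=> k _.
move=> B HB g. rewrite !eval_subst. rewrite -[RHS](bal Hb HB Hi (eval B g z) g).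
congr (eval _ _ _). fext => m; rewrite /env2.
case: ifP => _ //=. exact: (bz Hb HB).
Qed.

Lemma gsim_theta {T Sg n z al th} (Hb : @bit T Sg n z al th) {C : algebra T}
  {H : C -> Prop} (HI : ideal Sg z C H) h a :
  (forall s, s < n -> H (h s)) -> sim C n al H (eval C (envth n h a) th) a.
Proof.
move=> Hh i Hi.
have := HI.2 (iota 0 n) (subst (fun m => if m == 0 then subst (fun k => if k < n then Var k else Var n) th else Var n) (al i)) _ (envth n h a).
rewrite eval_subst.
have ->: (fun m => eval C (envth n h a) (if m == 0 then subst (fun k => if k < n then Var k else Var n) th else Var n)) = env2 (eval C (envth n h a) th) a.
  fext => m; rewrite /env2; case: ifP => _.
    rewrite eval_subst; congr (eval _ _ _); fext => k; case: ifP => Hk; cbn [eval]; rewrite /envth ?Hk ?ltnn //.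
  by cbn [eval]; rewrite /envth ltnn.
apply; last by move=> k; rewrite mem_iota add0n => /andP [_ Hk]; rewrite /envth Hk; apply: Hh.
move=> B HB g. rewrite !eval_subst.
rewrite -[RHS](bal Hb HB Hi (g n) g). congr (eval _ _ _). fext => m; rewrite /env2; case: ifP => _.
  rewrite eval_subst. rewrite -[RHS](bth0 Hb HB (g n) g). congr (eval _ _ _). fext => k.
  rewrite /envth. case: ifP => Hk; cbn [eval]; rewrite mem_iota add0n ?Hk ?ltnn //=.
by cbn [eval]; rewrite mem_iota add0n ltnn andbF.
Qed.

Lemma gG {T Sg n z al th} (Hb : @bit T Sg n z al th) {C : algebra T} (HC : models Sg C)
  {H : C -> Prop} (HI : ideal Sg z C H) t v e e' :
  (forall k, k != v -> e k = e' k) -> sim C n al H (e v) (e' v) ->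
  sim C n al H (eval C e t) (eval C e' t).
Proof.
move=> Heq Hs i Hi.
pose Y := map (fun s => s.*2.+1) (iota 0 n).
pose sg := fun k => if k == v then subst (fun m => if m < n then Var (m.*2.+1) else Var (v.*2)) th else Var (k.*2).
pose E := fun m => if odd m then eval C (env2 (e v) (e' v)) (al m./2) else e' m./2.
have := HI.2 Y (subst (fun m => if m == 0 then subst sg t else subst (fun k => Var k.*2) t) (al i)) _ E.
rewrite eval_subst.
have ->: (fun m => eval C E (if m == 0 then subst sg t else subst (fun k => Var k.*2) t)) = env2 (eval C e t) (eval C e' t).
  fext => m; rewrite /env2; case: ifP => _; rewrite eval_subst; congr (eval _ _ _); fext => k.
    rewrite /sg; case: (eqVneq k v) => [->|Hk].
      rewrite eval_subst -[RHS](bth Hb HC (e v) (e' v)). congr (eval _ _ _). fext => m'.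
      rewrite /envth. case: ifP => _; cbn [eval]; rewrite /E /= ?odd_double /= ?uphalf_double ?doubleK //.
    cbn [eval]; rewrite /E odd_double doubleK; symmetry; exact: Heq.
  by cbn [eval]; rewrite /E odd_double doubleK.
apply.
  move=> B HB g. rewrite !eval_subst.
  set g' := (fun k => eval B g (if k \in Y then z else Var k)).
  rewrite -[RHS](bal Hb HB Hi (eval B (fun k => g' k.*2) t) g). congr (eval _ _ _).
  fext => m; rewrite /env2; case: ifP => _; rewrite eval_subst //.
  congr (eval _ _ _). fext => k. rewrite /sg. case: (eqVneq k v) => [->|Hk] //.
  rewrite eval_subst. rewrite -[RHS](bth0 Hb HB (g' v.*2) g). congr (eval _ _ _).
  fext => m'. rewrite /envth; case: ifP => Hm //. cbn [eval]. by rewrite /g' memY Hm.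
move=> m /mapP [s]; rewrite mem_iota add0n => /andP [_ Hs'] ->.
rewrite /E /= odd_double /= uphalf_double. exact: Hs.
Qed.

Lemma gGop {T Sg n z al th} (Hb : @bit T Sg n z al th) {C : algebra T} (HC : models Sg C)
  {H : C -> Prop} (HI : ideal Sg z C H) (o : op T) (a : 'I_(arity o) -> C) j x :
  sim C n al H x (a j) ->
  sim C n al H (interp (fun r => if r == j then x else a r)) (interp a).
Proof.
move=> Hx.
pose e' := fun m => match (insub m : option 'I_(arity o)) with Some r => a r | None => a j end.
pose e := fun m => if m == val j then x else e' m.
have H1 := gG Hb HC HI (App o (fun r => Var (val r))) (val j) e e'.
have E1: (fun r => e (val r)) = (fun r => if r == j then x else a r).
  fext => r; rewrite /e /e' valK. by case: (eqVneq r j) => [->|Hne]; rewrite ?eqxx // ifF //; apply/negbTE.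
have E2: (fun r => e' (val r)) = a by fext => r; rewrite /e' valK.
move: H1; cbn [eval]; rewrite E1 E2; apply.
  by move=> k /negbTE Hk; rewrite /e Hk.
by rewrite /e eqxx /e' valK.
Qed.

Lemma grefl {T Sg n z al th} (Hb : @bit T Sg n z al th) {C : algebra T} (HC : models Sg C)
  {H : C -> Prop} (HI : ideal Sg z C H) x : sim C n al H x x.
Proof. move=> i Hi; rewrite (bal Hb HC Hi x (fun _ => x)); apply: (gH0 Hb HI). Qed.

Lemma gM {T Sg n z al th} (Hb : @bit T Sg n z al th) {C : algebra T} (HC : models Sg C)
  {H : C -> Prop} (HI : ideal Sg z C H) u w : sim C n al H u w -> H w -> H u.
Proof.
move=> Hs Hw. rewrite -(bth Hb HC u w). apply: (gin_theta Hb HI) => // s Hs'; exact: Hs.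
Qed.

Lemma gtrans {T Sg n z al th} (Hb : @bit T Sg n z al th) {C : algebra T} (HC : models Sg C)
  {H : C -> Prop} (HI : ideal Sg z C H) x y w :
  sim C n al H x y -> sim C n al H y w -> sim C n al H x w.
Proof.
move=> Hxy Hyw i Hi.
apply: (gM Hb HC HI _ (eval C (env2 y w) (al i))); last exact: Hyw.
apply: (gG Hb HC HI (al i) 0 (env2 x w) (env2 y w)); last exact: Hxy.
by move=> k; rewrite /env2 => /negbTE ->.
Qed.

Lemma gGall {T Sg n z al th} (Hb : @bit T Sg n z al th) {C : algebra T} (HC : models Sg C)
  {H : C -> Prop} (HI : ideal Sg z C H) (o : op T) (a b : 'I_(arity o) -> C) :
  (forall r, sim C n al H (a r) (b r)) -> sim C n al H (interp a) (interp b).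
Proof.
apply: (@chain C C _ (sim C n al H) (sim C n al H) (fun a => interp a)).
- move=> y; exact: (grefl Hb HC HI y).
- move=> x y w; exact: (gtrans Hb HC HI).
- move=> c j x; exact: (gGop Hb HC HI).
Qed.

Lemma models_reduct (S' : signature) (inF : op S' -> bool)
  (Sigma : identities (subsig inF)) (Sigma' : identities S')
  (HSS : forall t u, Sigma t u -> Sigma' (emb t) (emb u)) B :
  models Sigma' B -> models Sigma (reduct inF B).
Proof. move=> HB t u Hs e. rewrite -!eval_emb. exact: HB _ _ (HSS _ _ Hs) e. Qed.
Arguments models_reduct {S' inF Sigma Sigma'} HSS {B}.

Lemma bit_of T (Sg : identities T) n z al th :
  BIT_speciale Sg n z al th -> @bit _ Sg n z al th.
Proof.
move=> [_ [Hz _ _ Hal Hth]]; constructor.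
- move=> B0 HB e e'; by eapply eval_vars; [exact Hz | move=> k].
- move=> B0 HB i Hi u e. have := Hal i Hi B0 HB (fun _ => u). rewrite eval_subst /=.
  have ->: env2 u u = (fun _ => u) by fext => k; rewrite /env2; case: ifP.
  move=> ->; by eapply eval_vars; [exact Hz | move=> k].
- move=> B0 HB x y. have E := Hth B0 HB (env2 x y). rewrite eval_subst in E. apply: etrans _ E.
  congr (eval _ _ _); fext => k; rewrite /envth; case: ifP => //.
Qed.

Arguments bit_of {T Sg n z al th}.
Lemma bit_emb (S' : signature) (inF : op S' -> bool)
  (Sigma : identities (subsig inF)) (Sigma' : identities S')
  (HSS : forall t u, Sigma t u -> Sigma' (emb t) (emb u)) n zero alpha theta :
  @bit _ Sigma n zero alpha theta ->
  @bit _ Sigma' n (emb zero) (fun i => emb (alpha i)) (emb theta).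
Proof.
move=> Hb; constructor.
- move=> B0 HB e e'; rewrite !eval_emb; exact: (bz Hb (models_reduct HSS HB)).
- move=> B0 HB i Hi u e; rewrite !eval_emb; exact: (bal Hb (models_reduct HSS HB)).
- move=> B0 HB x y.
  have ->: (fun k => eval B0 (env2 x y) (emb (alpha k))) =
           (fun k => eval (reduct inF B0) (env2 x y) (alpha k)) by fext => k; exact: eval_emb.
  rewrite eval_emb; exact: (bth Hb (models_reduct HSS HB)).
Qed.

Arguments bit_emb {S' inF Sigma Sigma'} HSS {n zero alpha theta}.
Theorem corollary2p7
  (S' : signature) (inF : op S' -> bool)
  (Sigma : identities (subsig inF)) (Sigma' : identities S')
  (HSS : forall t u, Sigma t u -> Sigma' (emb t) (emb u))
  (n : nat) (zero : term (subsig inF)) (alpha : nat -> term (subsig inF))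
  (theta : term (subsig inF))
  (Hbit : BIT_speciale Sigma n zero alpha theta)
  (A' : algebra S') (HA' : models Sigma' A') (H : A' -> Prop) :
  let A := reduct inF A' in
  let al i x y := eval A (env2 x y) (alpha i) in
  let th h a := eval A (envth n h a) theta in
  let cond_i := ideal Sigma' (emb zero) A' H in
  let cond_ii :=
    ideal Sigma zero A H /\
    forall (tau : op S'), ~~ inF tau ->
    forall (a : 'I_(arity tau) -> A') (i : nat), i < n ->
    forall h : 'I_(arity tau) -> nat -> A',
      (forall r s, s < n -> H (h r s)) ->
      H (al i (@interp S' A' tau (fun r => th (h r) (a r))) (@interp S' A' tau a)) in
  let cond_iii :=
    ideal Sigma zero A H /\
    forall (tau : op S'), ~~ inF tau ->
    forall (a : 'I_(arity tau) -> A') (i : nat), i < n ->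
    forall (j : 'I_(arity tau)) (h : nat -> A'),
      (forall s, s < n -> H (h s)) ->
      H (al i (@interp S' A' tau (fun r => if r == j then th h (a j) else a r))
              (@interp S' A' tau a)) in
  (cond_i <-> cond_ii) /\ (cond_i <-> cond_iii).
Proof.
cbv zeta.
have HbS := bit_of Hbit.
have HbE := bit_emb HSS HbS.
have HA : models Sigma (reduct inF A') := models_reduct HSS HA'.
have simE : forall x y, sim A' n (fun i => emb (alpha i)) H x y ->
                        sim (reduct inF A') n alpha H x y.
  by move=> x y Hs i Hi; move: (Hs i Hi); rewrite eval_emb.
have simE' : forall x y, sim (reduct inF A') n alpha H x y ->
                         sim A' n (fun i => emb (alpha i)) H x y.
  by move=> x y Hs i Hi; move: (Hs i Hi); rewrite eval_emb.
have down : ideal Sigma' (emb zero) A' H -> ideal Sigma zero (reduct inF A') H.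
  move=> [Hne HI']; split => // Y t Ht e HY. rewrite -eval_emb. apply: (HI' Y) => //.
  move=> B0 HB g. rewrite eval_subst.
  have := Ht (reduct inF B0) (models_reduct HSS HB) g. rewrite eval_subst !eval_emb => <-.
  congr (eval (reduct inF B0) _ t). fext => k; case: ifP => _ //; exact (eval_emb _ _ B0 g zero).
have up : ideal Sigma zero (reduct inF A') H ->
   (forall tau, ~~ inF tau -> forall a b : 'I_(arity tau) -> A',
      (forall r, sim (reduct inF A') n alpha H (a r) (b r)) ->
      sim (reduct inF A') n alpha H (interp a) (interp b)) ->
   ideal Sigma' (emb zero) A' H.
  move=> HV Hop.
  have Ht: forall t e e', (forall k, sim (reduct inF A') n alpha H (e k) (e' k)) ->
      sim (reduct inF A') n alpha H (eval A' e t) (eval A' e' t).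
    elim=> [k|o f IH] e e' He /=; first exact: He.
    case Ho: (inF o).
      exact: (gGall HbS HA HV (exist _ o Ho) (fun i => eval A' e (f i))
                (fun i => eval A' e' (f i)) (fun r => IH r e e' He)).
    apply: Hop; [by rewrite Ho | move=> r; exact: IH].
  split; first exact: HV.1.
  move=> Y t Hti e HY.
  pose e0 := fun k => eval A' e (if k \in Y then emb zero else Var k).
  have E0 : eval A' e0 t = eval A' e (emb zero).
    by rewrite -eval_subst; exact: Hti A' HA' e.
  apply: (gM HbS HA HV _ (eval A' e0 t)).
    apply: Ht => k. rewrite /e0. case: ifP => Hk /=.
      rewrite eval_emb. apply: (gsim0 HbS HA HV). exact: HY.
    exact: (grefl HbS HA HV).
  rewrite E0 eval_emb. exact: (gH0 HbS HV).
split; split.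
- move=> Hi. have HV := down Hi. split => // tau _ a i Hi' h Hh.
  have := gGall HbE HA' Hi tau (fun r => eval (reduct inF A') (envth n (h r) (a r)) theta) a.
  move=> G; apply: (simE _ _ (G _)) => // r. apply: simE'.
  apply: (gsim_theta HbS HV) => s Hs; exact: Hh.
- move=> [HV Hii]. apply: (up HV) => tau Htau a b Hab.
  have Ea : a = (fun r => eval (reduct inF A') (envth n (fun s =>
       eval (reduct inF A') (env2 (a r) (b r)) (alpha s)) (b r)) theta).
    by fext => r; rewrite (bth HbS HA).
  rewrite [in interp a]Ea. move=> i Hi. apply: Hii => //.
- move=> Hi. have HV := down Hi. split => // tau _ a i Hi' j h Hh.
  have := gGop HbE HA' Hi tau a j (eval (reduct inF A') (envth n h (a j)) theta).
  move=> G; apply: (simE _ _ (G _)) => //. apply: simE'.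
  exact: (gsim_theta HbS HV).
- move=> [HV Hiii]. apply: (up HV) => tau Htau.
  apply: (@chain A' A' _ (sim (reduct inF A') n alpha H) (sim (reduct inF A') n alpha H)
           (fun a => interp a)).
  + move=> y; exact: (grefl HbS HA HV y).
  + move=> x y w; exact: (gtrans HbS HA HV).
  + move=> a j x Hx. rewrite -[x](bth HbS HA x (a j)).
    move=> i Hi. exact: (Hiii tau Htau a i Hi j _ Hx).
Qed.
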